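(* Let $\mathcal{K}=\mathbb{F}_q((t))$, $\mathcal{O}=\mathbb{F}_q[[t]]$ and $G=PGL(2,\mathcal{K})$. Let $B(\mathcal{K})\subset G$ be the subgroup of (classes of) upper triangular matrices, let $$I^0=\left\{\begin{pmatrix}1+ta & b\\ tc & 1+td\end{pmatrix} : a,b,c,d\in\mathcal{O}\right\}\subset G,$$ and let $A\subset G$ be the subgroup generated by $I^0$ and $\sigma=\begin{pmatrix}0&1\\ t&0\end{pmatrix}$. Then $PGL(2,\mathcal{K})=B(\mathcal{K})\cdot A$. *)

(* Defs.v *)
From HB Require Import structures.
From mathcomp Require Import all_boot all_order all_algebra.
From mathcomp Require Import boolp.
Set Implicit Arguments. Unset Strict Implicit. Unset Printing Implicit Defensive.
Import GRing.Theory.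
Local Open Scope ring_scope.

Section PowerSeries.
Variable F : fieldType.

Inductive pseries := PSeries of nat -> F.
Definition coefs (a : pseries) : nat -> F := let: PSeries f := a in f.

HB.instance Definition _ := gen_eqMixin pseries.
HB.instance Definition _ := gen_choiceMixin pseries.

Lemma pseriesP (a b : pseries) : (forall n, coefs a n = coefs b n) -> a = b.
Proof. by case: a b => [f] [g] /= H; congr PSeries; apply: funext. Qed.

Definition ps0 := PSeries (fun _ => 0).
Definition psadd a b := PSeries (fun n => coefs a n + coefs b n).
Definition psopp a := PSeries (fun n => - coefs a n).
Definition ps1 := PSeries (fun n => (n == 0)%:R).
Definition psmul a b :=
  PSeries (fun n => \sum_(i < n.+1) coefs a i * coefs b (n - i)).

Lemma psaddA : associative psadd.
Proof. by move=> a b c; apply: pseriesP => n /=; rewrite addrA. Qed.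
Lemma psaddC : commutative psadd.
Proof. by move=> a b; apply: pseriesP => n /=; rewrite addrC. Qed.
Lemma psadd0 : left_id ps0 psadd.
Proof. by move=> a; apply: pseriesP => n /=; rewrite add0r. Qed.
Lemma psaddN : left_inverse ps0 psopp psadd.
Proof. by move=> a; apply: pseriesP => n /=; rewrite addNr. Qed.

HB.instance Definition _ := GRing.isZmodule.Build pseries
  psaddA psaddC psadd0 psaddN.

Definition trunc m a : {poly F} := \poly_(i < m) coefs a i.

Lemma coef_truncM m a b n : (n < m)%N ->
  (trunc m a * trunc m b)`_n = coefs (psmul a b) n.
Proof.
move=> lt; rewrite coefM /=; apply: eq_bigr => i _.
by rewrite !coef_poly (leq_trans (ltn_ord i) lt) (leq_ltn_trans (leq_subr i n) lt).
Qed.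

Lemma coefM_take m (p q : {poly F}) n : (n < m)%N ->
  (p * take_poly m q)`_n = (p * q)`_n.
Proof.
move=> lt; rewrite !coefM; apply: eq_bigr => i _.
by rewrite coef_take_poly (leq_ltn_trans (leq_subr i n) lt).
Qed.

Lemma trunc_mul m a b : trunc m (psmul a b) = take_poly m (trunc m a * trunc m b).
Proof.
apply/polyP => n; rewrite coef_poly coef_take_poly; case: ifP => // lt.
by rewrite coef_truncM.
Qed.

Lemma psmulA : associative psmul.
Proof.
move=> a b c; apply: pseriesP => n.
have E1 : coefs (psmul a (psmul b c)) n =
    (trunc n.+1 a * (trunc n.+1 b * trunc n.+1 c))`_n.
  by rewrite -(coef_truncM a (psmul b c) (ltnSn n)) trunc_mul; apply: coefM_take.
have E2 : coefs (psmul (psmul a b) c) n =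
    (trunc n.+1 c * (trunc n.+1 a * trunc n.+1 b))`_n.
  by rewrite -(coef_truncM (psmul a b) c (ltnSn n)) trunc_mul mulrC; apply: coefM_take.
by rewrite E1 E2 [in RHS]mulrC mulrA.
Qed.

Lemma psmulC : commutative psmul.
Proof.
move=> a b; apply: pseriesP => n.
by rewrite -(coef_truncM a b (ltnSn n)) -(coef_truncM b a (ltnSn n)) mulrC.
Qed.

Lemma psmul1 : left_id ps1 psmul.
Proof.
move=> a; apply: pseriesP => n /=; rewrite big_ord_recl /= subn0 mul1r.
by rewrite big1 ?addr0 // => i _; rewrite mul0r.
Qed.

Lemma psmulDl : left_distributive psmul psadd.
Proof.
move=> a b c; apply: pseriesP => n /=; rewrite -big_split /=.
by apply: eq_bigr => i _; rewrite mulrDl.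
Qed.

Lemma ps1_neq0 : ps1 != ps0.
Proof.
apply/eqP => /(congr1 (fun a => coefs a 0)) /= /eqP.
by rewrite oner_eq0.
Qed.

HB.instance Definition _ := GRing.Zmodule_isComNzRing.Build pseries
  psmulA psmulC psmul1 psmulDl ps1_neq0.

Definition psunit : {pred pseries} := fun a => coefs a 0 != 0.

Fixpoint invl (a : pseries) n : seq F :=
  match n with
  | 0 => [:: (coefs a 0)^-1]
  | n'.+1 => let s := invl a n' in
      rcons s (- (coefs a 0)^-1 *
               \sum_(i < n'.+1) coefs a i.+1 * nth 0 s (n' - i))
  end.

Lemma size_invl a n : size (invl a n) = n.+1.
Proof. by elim: n => //= n IH; rewrite size_rcons IH. Qed.

Lemma nth_invl a n m : (m <= n)%N -> nth 0 (invl a n) m = nth 0 (invl a m) m.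
Proof.
elim: n m => [|n IH] m; first by rewrite leqn0 => /eqP->.
rewrite leq_eqVlt => /orP[/eqP->//|lt] /=.
by rewrite nth_rcons size_invl lt; apply: IH.
Qed.

Definition psinv a :=
  if a \in psunit then PSeries (fun n => nth 0 (invl a n) n) else a.

Lemma psmulV : {in psunit, left_inverse ps1 psinv psmul}.
Proof.
move=> a ua; rewrite psmulC /psinv ua; apply: pseriesP => n /=.
case: n => [|n]; first by rewrite big_ord1 /= mulfV.
rewrite big_ord_recl /= subn0 nth_rcons size_invl ltnn eqxx.
rewrite mulrA mulrN mulfV // mulN1r.
set S := (X in - X + _); set S' := (X in _ + X).
suff -> : S' = S by rewrite addNr.
apply: eq_bigr => i _; rewrite subSS; congr (_ * _).
by rewrite [RHS]nth_invl ?leq_subr.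
Qed.

Lemma psunitPl : forall x y, psmul y x = ps1 -> x \in psunit.
Proof.
move=> x y /(congr1 (fun a => coefs a 0)) /=; rewrite big_ord1 subnn => h.
rewrite unfold_in /=; apply/eqP => x0; move: h; rewrite x0 mulr0 => /eqP.
by rewrite eq_sym oner_eq0.
Qed.

Lemma psinv_out : {in [predC psunit], psinv =1 id}.
Proof. by move=> a; rewrite inE => /negbTE h; rewrite /psinv h. Qed.

HB.instance Definition _ := GRing.ComNzRing_hasMulInverse.Build pseries
  psmulV psunitPl psinv_out.

Lemma ps_neq0 a : a != ps0 -> exists i, coefs a i != 0.
Proof.
move=> an; apply: contrapT => H; move: an; apply/negP; rewrite negbK; apply/eqP.
apply: pseriesP => i /=; case: (eqVneq (coefs a i) 0) => // h.
by exfalso; apply: H; exists i.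
Qed.

Lemma ps_idomain_aux a b : psmul a b = ps0 -> (a == ps0) || (b == ps0).
Proof.
move=> ab0; case: (eqVneq a ps0) => //= /ps_neq0 exa.
case: (eqVneq b ps0) => //= /ps_neq0 exb; exfalso.
case: (ex_minnP exa) => i ai mini; case: (ex_minnP exb) => j bj minj.
move/(congr1 (fun c => coefs c (i + j)%N)): ab0 => /=.
have lti : (i < (i + j).+1)%N by rewrite ltnS leq_addr.
rewrite (bigD1 (Ordinal lti)) //= big1 ?addr0 ?addKn; last first.
  move=> k /eqP /= nek; case: (ltngtP k i) => [lt|gt|eq].
  - have : coefs a k == 0 by apply: contraTT lt; rewrite -leqNgt; apply: mini.
    by move/eqP->; rewrite mul0r.
  - have : coefs b (i + j - k) == 0.
      apply: contraTT gt; rewrite -leqNgt => /minj.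
      rewrite leq_subRL; last by rewrite -ltnS (ltn_ord k).
      by rewrite leq_add2r.
    by move/eqP->; rewrite mulr0.
  - by exfalso; apply: nek; apply: val_inj.
by move/eqP; rewrite mulf_eq0 (negbTE ai) (negbTE bj).
Qed.

Lemma ps_idomain : GRing.integral_domain_axiom pseries.
Proof. exact: ps_idomain_aux. Qed.

HB.instance Definition _ := GRing.ComUnitRing_isIntegral.Build pseries
  ps_idomain.

Definition ps_t : pseries := PSeries (fun n => (n == 1)%:R).

End PowerSeries.

Notation laurent F := {fraction (pseries F)}.

Section PGL2.
Variable F : fieldType.
Local Notation K := (laurent F).

Definition toK (x : pseries F) : K := @FracField.tofrac (pseries F) x.

Definition tK : K := toK (ps_t F).

Definition inO (x : K) : Prop := exists a : pseries F, x = toK a.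

Definition mx22 (a b c d : K) : 'M[K]_2 :=
  \matrix_(i < 2, j < 2)
    if i == ord0 then (if j == ord0 then a else b) else (if j == ord0 then c else d).

Definition inI0 (M : 'M[K]_2) : Prop :=
  exists a b c d, [/\ inO a, inO b, inO c, inO d &
    M = mx22 (1 + tK * a) b (tK * c) (1 + tK * d)].

Definition sigma : 'M[K]_2 := mx22 0 1 tK 0.

Definition upper (M : 'M[K]_2) : Prop := M 1 0 = 0.

(* preimage in GL_2(K) of the subgroup A of PGL_2(K) generated by (the images
   of) I^0 and sigma: the subgroup of GL_2(K) generated by I^0, sigma and the
   nonzero scalar matrices (the kernel of GL_2 -> PGL_2). *)
Inductive inA : 'M[K]_2 -> Prop :=
| inA_scalar (c : K) : c != 0 -> inA c%:M
| inA_I0 M : inI0 M -> inA M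
| inA_sigma : inA sigma
| inA_mul M N : inA M -> inA N -> inA (M *m N)
| inA_inv M : M \in unitmx -> inA M -> inA (invmx M).

End PGL2.

(* Main.v *)
Require Import Defs.
From HB Require Import structures.
From mathcomp Require Import all_boot all_order all_algebra.
From mathcomp Require Import generic_quotient.
From mathcomp Require Import ring.
Set Implicit Arguments. Unset Strict Implicit.
Import GRing.Theory.
Local Open Scope ring_scope.
Local Open Scope quotient_scope.

Lemma fracP (R : idomainType) (x : {fraction R}) :
  exists p q : R, q != 0 /\ x * (tofrac q) = tofrac p.
Proof.
elim/quotW: x => r.
exists (\n_r), (\d_r); split; first exact: denom_ratioP.
change (FracField.mul ((\pi_(FracField.type R) r)) (tofrac \d_r) = tofrac \n_r).
rewrite !piE.
apply/eqmodP; rewrite /= FracField.equivfE /FracField.mulf /=.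
have n1 := numer_Ratio _ (oner_neq0 R); have d1 := denom_Ratio _ (oner_neq0 R).
rewrite !n1 !d1 mulr1 numer_Ratio ?denom_Ratio ?mulr1 ?denom_ratioP // mulrC //.
Qed.

Lemma helpA (R : comNzRingType) (l g a b : R) : l * (g * a * b) = (l * a * b) * g.
Proof. ring. Qed.
Lemma helpB (R : comNzRingType) (l g a b : R) : l * (g * b * a) = (l * a * b) * g.
Proof. ring. Qed.

Section Aux.
Variable F : fieldType.
Local Notation K := (laurent F).

Lemma mx22E (a b c d : K) :
  [/\ mx22 a b c d 0 0 = a, mx22 a b c d 0 1 = b,
      mx22 a b c d 1 0 = c & mx22 a b c d 1 1 = d].
Proof. by rewrite !mxE. Qed.

Lemma mx22_mul (a b c d a' b' c' d' : K) :
  mx22 a b c d *m mx22 a' b' c' d' =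
  mx22 (a * a' + b * c') (a * b' + b * d') (c * a' + d * c') (c * b' + d * d').
Proof.
apply/matrixP => i j; rewrite !mxE !big_ord_recr big_ord0 /= !mxE.
by case: i => [[|[|i]] //=] ?; case: j => [[|[|j]] //=] ?; rewrite add0r.
Qed.

Lemma mx22_1 : (1%:M : 'M[K]_2) = mx22 1 0 0 1.
Proof.
apply/matrixP => i j; rewrite !mxE.
by case: i => [[|[|i]] //=] ?; case: j => [[|[|j]] //=] ?; rewrite add0r.
Qed.

Lemma mx22_eq (a b c d a' b' c' d' : K) :
  a = a' -> b = b' -> c = c' -> d = d' -> mx22 a b c d = mx22 a' b' c' d'.
Proof. by move=> -> -> -> ->. Qed.

Lemma tK_neq0 : tK F != 0.
Proof.
rewrite /tK /toK tofrac_eq0; apply/eqP => /(congr1 (fun a => coefs a 1)) /=.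
by move/eqP; rewrite oner_eq0.
Qed.

Lemma inO_toK (a : pseries F) : @inO F (toK a).
Proof. by exists a. Qed.

Lemma inA_U (b : K) : inO b -> inA (mx22 1 b 0 1).
Proof.
move=> hb; apply: inA_I0; exists 0, b, 0, 0; split => //; try by exists 0; rewrite /toK tofrac0.
by rewrite !mulr0 !addr0.
Qed.

Lemma inA_L (c : K) : inO c -> inA (mx22 1 0 (tK F * c) 1).
Proof.
move=> hc; apply: inA_I0; exists 0, 0, c, 0; split => //; try by exists 0; rewrite /toK tofrac0.
by rewrite !mulr0 !addr0.
Qed.

Lemma coef_mul (a b : pseries F) n :
  coefs (a * b) n = \sum_(i < n.+1) coefs a i * coefs b (n - i).
Proof. by []. Qed.

Lemma coef_tmul (a : pseries F) n :
  coefs (ps_t F * a) n = if n is n'.+1 then coefs a n' else 0.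
Proof.
rewrite coef_mul big_ord_recl /= mul0r add0r.
case: n => [|n]; first by rewrite big_ord0.
rewrite big_ord_recl /= mul1r subSS subn0 big1 ?addr0 // => i _.
by rewrite /= mul0r.
Qed.

Definition shift (a : pseries F) := PSeries (fun n => coefs a n.+1).

Lemma shiftE (a : pseries F) : coefs a 0 = 0 -> a = ps_t F * shift a.
Proof. by move=> a0; apply: pseriesP => n; rewrite coef_tmul; case: n. Qed.

Lemma ps_unit (a : pseries F) : coefs a 0 != 0 -> a \is a GRing.unit.
Proof. by []. Qed.


Definition reach (p q : pseries F) := exists a : 'M[K]_2,
  [/\ inA a, a \in unitmx &
      exists2 l : K, l != 0 & a 1 0 = l * toK p /\ a 1 1 = l * toK q].

Lemma toK_neq0 (p : pseries F) : p != 0 -> toK p != 0.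
Proof. by rewrite /toK tofrac_eq0. Qed.

Lemma coef0_neq0 (p : pseries F) : coefs p 0 != 0 -> p != 0.
Proof. by apply: contraNneq => ->. Qed.

Lemma reach1 p q : coefs p 0 != 0 -> reach p q.
Proof.
move=> p0; have up := ps_unit p0; have tp := toK_neq0 (coef0_neq0 p0).
have t0 := tK_neq0.
set b := toK (q * p^-1).
have Eb : b = toK q / toK p by rewrite /b /toK rmorphM rmorphV.
exists (sigma F *m mx22 1 b 0 1); split.
- by apply: inA_mul; [exact: inA_sigma | apply: inA_U; exact: inO_toK].
- apply: (proj1 (@mulmx1_unit _ _ _ (mx22 (-b) (tK F)^-1 1 0) _)).
  rewrite /sigma !mx22_mul mx22_1; apply: mx22_eq; rewrite !(mul0r, mulr0, mul1r, mulr1, addr0, add0r) //.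
    by rewrite mulrN addNr.
  exact: mulfV.
- exists (tK F / toK p); first by rewrite mulf_neq0 ?invr_eq0.
  rewrite /sigma mx22_mul !mxE /= !(mul0r, mulr0, mul1r, mulr1, addr0, add0r).
  by rewrite divfK // Eb mulrA mulrAC.
Qed.

Lemma reach2 p q : coefs p 0 = 0 -> coefs q 0 != 0 -> reach p q.
Proof.
move=> p0 q0; have uq := ps_unit q0; have tq := toK_neq0 (coef0_neq0 q0).
have t0 := tK_neq0.
set c := toK (shift p * q^-1).
have Ep := shiftE p0.
have Ec : tK F * c = toK p / toK q.
  by rewrite /c /tK /toK rmorphM rmorphV // mulrA -rmorphM -Ep.
exists (mx22 1 0 (tK F * c) 1); split.
- by apply: inA_L; exact: inO_toK.
- apply: (proj1 (@mulmx1_unit _ _ _ (mx22 1 0 (- (tK F * c)) 1) _)).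
  rewrite !mx22_mul mx22_1; apply: mx22_eq;
    by rewrite !(mul0r, mulr0, mul1r, mulr1, addr0, add0r) ?addrN.
- exists (toK q)^-1; first by rewrite invr_eq0.
  by rewrite !mxE /= Ec mulrC mulVf.
Qed.

Lemma reach_shift p q : coefs p 0 = 0 -> coefs q 0 = 0 ->
  reach (shift p) (shift q) -> reach p q.
Proof.
move=> p0 q0 [a [Aa ua [l l0 [h1 h2]]]]; exists a; split => //.
have t0 := tK_neq0.
exists (l / tK F); first by rewrite mulf_neq0 ?invr_eq0.
have Ep : toK p = tK F * toK (shift p) by rewrite {1}(shiftE p0) /toK rmorphM.
have Eq : toK q = tK F * toK (shift q) by rewrite {1}(shiftE q0) /toK rmorphM.
by rewrite h1 h2 Ep Eq !mulrA divfK.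
Qed.

Lemma reach_all k : forall p q, coefs p k != 0 \/ coefs q k != 0 -> reach p q.
Proof.
elim: k => [|k IH] p q H.
  case: (eqVneq (coefs p 0) 0) => p0; last exact: reach1.
  by apply: reach2 => //; case: H => //; rewrite p0 eqxx.
case: (eqVneq (coefs p 0) 0) => p0; last exact: reach1.
case: (eqVneq (coefs q 0) 0) => q0; last exact: reach2.
by apply: reach_shift => //; apply: IH.
Qed.

End Aux.

Theorem mainTheorem2 (F : finFieldType) (g : 'M[laurent F]_2) :
  g \in unitmx ->
  exists (b a : 'M[laurent F]_2),
    [/\ b \in unitmx, upper b, inA a & g = b *m a].
Proof.
move=> ug.
case: (eqVneq (g 1 0) 0) => g10.
  exists g, 1%:M; split => //; first exact: inA_scalar (oner_neq0 _).
  by rewrite mulmx1.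
have [p1 [q1 [q1n E1]]] := fracP (g 1 0).
have [p2 [q2 [q2n E2]]] := fracP (g 1 1).
have p1n : p1 != 0.
  apply/eqP => p10; move: E1; rewrite p10 tofrac0 => /eqP.
  by rewrite mulf_eq0 tofrac_eq0 (negbTE q1n) orbF (negbTE g10).
have Pn : p1 * q2 != 0 by rewrite mulf_neq0.
have [i Pi] := ps_neq0 Pn.
have [a [Aa ua [l l0 [h1 h2]]]] := reach_all (or_introl Pi : _ \/ coefs (p2 * q1) i != 0).
set X := l * toK q1 * toK q2.
have Xn : X != 0 by rewrite /X !mulf_neq0 // toK_neq0.
have hg0 : g 1 0 = X^-1 * a 1 0.
  rewrite h1 /toK tofracM -E1 (helpA l (g 1 0) (tofrac q1) (tofrac q2)).
  exact: (esym (mulKf Xn (g 1 0))).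
have hg1 : g 1 1 = X^-1 * a 1 1.
  rewrite h2 /toK tofracM -E2 (helpB l (g 1 1) (tofrac q1) (tofrac q2)).
  exact: (esym (mulKf Xn (g 1 1))).
have hg : forall j, g 1 j = X^-1 * a 1 j.
  move=> j; case: (eqVneq j 0) => [->|j0] //.
  have -> : j = 1 by apply/val_inj; case: j j0 => [[|[|]]] //= ? /eqP; rewrite -val_eqE.
  by [].
exists (g *m invmx a), a; split.
- by rewrite unitmx_mul ug unitmx_inv.
- rewrite /upper mxE.
  under eq_bigr do rewrite hg -mulrA.
  rewrite -mulr_sumr.
  have := congr1 (fun M : 'M[laurent F]_2 => M 1 0) (mulmxV ua).
  rewrite /= !mxE => ->.
  by rewrite mulr0.
- exact: Aa.
- by rewrite mulmxKV.
Qed.
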